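(* Let $G$ be finite and $z\in\mathbb C\setminus\{0\}$. The pairing $\langle\cdot,\cdot\rangle$ restricted to $\{f\in D_\infty:\mathcal Tf=zf\}\times\{\mu\in\mathrm{FA}(P):\mathcal T'\mu=z\mu\}$ is non-degenerate if and only if $\ker(S-z)=\ker(S-z)^k$ for all $k\ge1$, i.e. the eigenspace of $S$ for $z$ coincides with the generalized eigenspace of $S$ for $z$.
   Context: $G$ is a finite connected graph (no loops, no multiple edges, every vertex of degree $\ge2$); $E$ oriented edges, $\iota,\tau$, opposite $\bar e$; turn $e\rightsquigarrow e'$ iff $\tau(e)=\iota(e')$, $e'\ne\bar e$. $P$ = infinite paths $(e_1,e_2,\dots)$ with $e_i\rightsquigarrow e_{i+1}$; $(\mathcal Tf)(e_1,\dots)=\sum_{e_0\rightsquigarrow e_1}f(e_0,e_1,\dots)$. $S$ is the operator on $\mathrm{Map}(E)$ (all functions $E\to\mathbb C$), $(Sg)(e)=\sum_{e'\rightsquigarrow e}g(e')$. $D_m$ = functions on $P$ depending only on $e_1,\dots,e_m$, $D_\infty=\bigcup D_m$. Postal codes: finite paths $c=(c_1,\dots,c_m)$, $m\ge1$, with $c_i\rightsquigarrow c_{i+1}$; $\mathcal C_m$, $\mathcal C$; $\mathbf 1_c$ indicator of the paths beginning with $c$. $\mathrm{FA}(P)=\{\mu:\mathcal C\to\mathbb C:\mu(c)=\sum_{e:c_m\rightsquigarrow e}\mu(c,e)\ \forall c\}$. Pairing $\langle f,\mu\rangle=\sum_{c\in\mathcal C_m}f(c)\mu(c)$ for $f\in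 D_m$ ($f(c)$ the value of $f$ on paths beginning with $c$). $(\mathcal T'\mu)(c)=\langle\mathcal T\mathbf 1_c,\mu\rangle$. *)

(* Defs.v *)
From HB Require Import structures.
From mathcomp Require Import all_boot all_order all_algebra.
From mathcomp Require Import reals complex.
Set Implicit Arguments. Unset Strict Implicit. Unset Printing Implicit Defensive.
Import Order.TTheory GRing.Theory Num.Theory.
Local Open Scope ring_scope.
Local Open Scope complex_scope.

Section Defs.
Variables (R : realType) (V : finType) (adj : rel V).

Definition C := R[i].

Definition E := {x : V * V | adj x.1 x.2}.
Definition iota (e : E) : V := (val e).1.
Definition tau (e : E) : V := (val e).2.
(* the underlying pair of the opposite edge \bar e is (tau e, iota e) *)
Definition turn (e e' : E) : bool := (tau e == iota e') && (val e' != (tau e, iota e)).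

(* infinite non-backtracking paths, indexed from 0 (p 0 = e_1) *)
Definition is_path (p : nat -> E) : Prop := forall n, turn (p n) (p n.+1).

(* functions on P are functions (nat -> E) -> C, only their values on P matter *)
Definition inD (m : nat) (f : (nat -> E) -> C) : Prop :=
  forall p q, is_path p -> is_path q -> (forall i, (i < m)%N -> p i = q i) -> f p = f q.
Definition inDinf (f : (nat -> E) -> C) : Prop := exists m, inD m f.

Definition pcons (e0 : E) (p : nat -> E) : nat -> E :=
  fun i => if i is i'.+1 then p i' else e0.

Definition Top (f : (nat -> E) -> C) : (nat -> E) -> C :=
  fun p => \sum_(e0 : E | turn e0 (p 0%N)) f (pcons e0 p).

Definition postal (c : seq E) : bool :=
  if c is x :: c' then path turn x c' else false.

Definition ind (c : seq E) : (nat -> E) -> C :=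
  fun p => if [forall i : 'I_(size c), p i == nth (p 0%N) c i] then 1 else 0.

Definition nxt (e : E) : E := odflt e [pick e' | turn e e'].
Definition ext (x : E) (c : seq E) : nat -> E :=
  fun i => if (i < size c)%N then nth x c i
           else iter (i - size c).+1 nxt (last x c).
(* value f(c) of f on (a) path beginning with c *)
Definition evalc (f : (nat -> E) -> C) (c : seq E) : C :=
  if c is x :: _ then f (ext x c) else 0.

Definition isFA (mu : seq E -> C) : Prop :=
  forall c, postal c -> mu c = \sum_(e : E | turn (last (head e c) c) e) mu (rcons c e).

(* pairing <f, mu> computed at level m (for f in D_m) *)
Definition pairing_at (m : nat) (f : (nat -> E) -> C) (mu : seq E -> C) : C :=
  \sum_(t : m.-tuple E | postal t) evalc f t * mu t.

(* dual transfer operator: (T' mu)(c) = <T 1_c, mu>, with T 1_c in D_|c| *)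
Definition Tdual (mu : seq E -> C) : seq E -> C :=
  fun c => pairing_at (size c) (Top (ind c)) mu.

Definition eigf (z : C) (f : (nat -> E) -> C) : Prop :=
  inDinf f /\ forall p, is_path p -> Top f p = z * f p.
Definition eigmu (z : C) (mu : seq E -> C) : Prop :=
  isFA mu /\ forall c, postal c -> Tdual mu c = z * mu c.

Definition pairing_nondegenerate (z : C) : Prop :=
  (forall f, eigf z f -> (exists p, is_path p /\ f p != 0) ->
     exists mu, eigmu z mu /\ exists m, inD m f /\ pairing_at m f mu != 0) /\
  (forall mu, eigmu z mu -> (exists c, postal c /\ mu c != 0) ->
     exists f, eigf z f /\ exists m, inD m f /\ pairing_at m f mu != 0).

Definition Sop (g : E -> C) : E -> C := fun e => \sum_(e' : E | turn e' e) g e'.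
Definition Sminus (z : C) (g : E -> C) : E -> C := fun e => Sop g e - z * g e.
Definition in_ker_pow (z : C) (k : nat) (g : E -> C) : Prop :=
  forall e, iter k (Sminus z) g e = 0.

End Defs.

Arguments in_ker_pow {R V} adj z k g.
Arguments pairing_nondegenerate {R V} adj z.

(* Main.v *)
Require Import Defs.
From HB Require Import structures.
From mathcomp Require Import all_boot all_order all_algebra.
From mathcomp Require Import reals complex.
From mathcomp Require Import ring.
Import Order.TTheory GRing.Theory Num.Theory.
Local Open Scope ring_scope.
Set Implicit Arguments. Unset Strict Implicit. Unset Printing Implicit Defensive.

Lemma big_tuple_cons (T : finType) (K : nmodType) n (F : seq T -> K) :
  \sum_(t : n.+1.-tuple T) F t = \sum_(x : T) \sum_(t : n.-tuple T) F (x :: t).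
Proof.
rewrite pair_big /=.
rewrite (reindex (fun p : T * n.-tuple T => [tuple of p.1 :: p.2])) //=.
exists (fun t : n.+1.-tuple T => (thead t, [tuple of behead t])).
  by move=> [x t] _ /=; congr (_, _); apply: val_inj.
by move=> t _; case/tupleP: t => x t; apply: val_inj.
Qed.

Lemma big_tuple0 (T : finType) (K : nmodType) (F : seq T -> K) :
  \sum_(t : 0.-tuple T) F t = F [::].
Proof.
rewrite (big_pred1 [tuple]) // => t /=; by rewrite [t]tuple0; apply/esym/eqP.
Qed.

Section LA.
Variables (F : fieldType) (n : nat) (A : 'M[F]_n).
Hypothesis hyp : forall u : 'rV[F]_n, u *m A *m A = 0 -> u *m A = 0.

Lemma hypM m (B : 'M[F]_(m, n)) : B *m A *m A = 0 -> B *m A = 0.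
Proof.
move=> H; apply/row_matrixP => i; rewrite row0 row_mul hyp //.
by rewrite -row_mul -row_mul H row0.
Qed.

Lemma LA_a (u : 'rV[F]_n) : u *m A = 0 -> u != 0 ->
  exists w : 'cV[F]_n, A *m w = 0 /\ (u *m w) 0 0 != 0.
Proof.
move=> Hu Hnz.
have Hnot : ~~ (u <= A)%MS.
  apply/negP => /submxP [v Hv].
  move: Hnz; rewrite Hv hyp ?eqxx //.
  by rewrite -Hv.
move: Hnot; rewrite submxE => /matrix0Pn [i [j Hij]].
exists (cokermx A *m delta_mx j 0); split.
  by rewrite mulmxA mulmx_coker mul0mx.
by rewrite mulmxA -colE mxE -(ord1 i).
Qed.

Lemma LA_b (w : 'cV[F]_n) : A *m w = 0 -> w != 0 ->
  exists u : 'rV[F]_n, u *m A = 0 /\ (u *m w) 0 0 != 0.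
Proof.
move=> Hw Hnz.
case: (boolP [exists i, (row i (kermx A) *m w) 0 0 != 0]).
  move=> /existsP [i Hi]; exists (row i (kermx A)); split => //.
  by rewrite -row_mul mulmx_ker row0.
rewrite negb_exists => /forallP Hall.
have HK : kermx A *m w = 0.
  apply/row_matrixP => i; rewrite row0 row_mul.
  apply/matrixP => a b; rewrite [a]ord1 [b]ord1 [RHS]mxE.
  by move: (Hall i); rewrite negbK => /eqP.
have Hcap : (kermx A :&: A)%MS = 0.
  set X := (kermx A :&: A)%MS.
  have H1 : X *m A = 0 by apply/sub_kermxP; exact: capmxSl.
  have /submxP [D HD] : (X <= A)%MS by exact: capmxSr.
  by rewrite HD hypM // -HD.
have Hfull : row_full (kermx A + A)%MS.
  rewrite /row_full; apply/eqP.
  move: (mxrank_sum_cap (kermx A) A); rewrite Hcap mxrank0 addn0 mxrank_ker.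
  by move=> ->; rewrite subnK // rank_leq_col.
have /sub_addsmxP [[D1 D2] /= HD] : ((1%:M : 'M[F]_n) <= kermx A + A)%MS.
  exact: submx_full.
move: Hnz; rewrite -(mul1mx w) HD mulmxDl -[D1 *m _ *m w]mulmxA -[D2 *m _ *m w]mulmxA HK Hw !mulmx0 addr0 eqxx.
by [].
Qed.
End LA.
Section G.
Variables (R : realType) (V : finType) (adj : rel V).
Local Notation E := (E adj).
Local Notation CC := (C R).
Local Notation tr := (@turn V adj).

Lemma postal_cons (x : E) s : postal (x :: s) = path tr x s.
Proof. by []. Qed.

Lemma postal_catl (a b : seq E) : a != [::] -> postal (a ++ b) -> postal a.
Proof. by case: a => //= x a _; rewrite cat_path => /andP[]. Qed.

Lemma postal_rcons (a : seq E) e : postal a -> 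
  postal (rcons a e) = turn (last (head e a) a) e.
Proof. case: a => // x a Hp. rewrite /postal rcons_cons rcons_path. by rewrite -postal_cons Hp. Qed.

Lemma lemK (mu : seq E -> CC) : isFA mu -> forall n pre, postal pre ->
  \sum_(t : n.-tuple E) (if postal (pre ++ t) then mu (pre ++ t) else 0) = mu pre.
Proof.
move=> FA; elim=> [|n IH] pre Hpre.
  by rewrite (big_tuple0 (fun t => if postal (pre ++ t) then mu (pre ++ t) else 0)) cats0 Hpre.
rewrite (big_tuple_cons _ (fun t => if postal (pre ++ t) then mu (pre ++ t) else 0)) (FA _ Hpre) [RHS]big_mkcond /=.
apply: eq_bigr => x _.
under eq_bigr => t _ do rewrite -cat_rcons.
case Ht: (turn (last (head x pre) pre) x).
  by rewrite IH // postal_rcons.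
rewrite big1 // => t _.
case Hp: (postal _) => //.
have H1 : postal (rcons pre x).
  by apply: (postal_catl _ Hp); rewrite -size_eq0 size_rcons.
by move: H1; rewrite postal_rcons // Ht.
Qed.

Lemma lemJ (mu : seq E -> CC) : isFA mu -> forall d n pre, (size d <= n)%N ->
  pre ++ d != [::] ->
  \sum_(t : n.-tuple E) (if postal (pre ++ t) && (take (size d) t == d)
                         then mu (pre ++ t) else 0)
  = if postal (pre ++ d) then mu (pre ++ d) else 0.
Proof.
move=> FA; elim=> [|x d IH] n pre.
  move=> _; rewrite cats0 => Hne.
  under eq_bigr => t _ do rewrite take0 eqxx andbT.
  case Hp: (postal pre); first by rewrite lemK.
  rewrite big1 // => t _.
  case Hq: (postal _) => //.
  by move: (postal_catl Hne Hq); rewrite Hp.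
case: n => // n /= Hs _.
rewrite (big_tuple_cons _ (fun t => if postal (pre ++ t) && (take (size d).+1 t == x :: d)
                         then mu (pre ++ t) else 0)) /=.
rewrite (bigD1 x) //= [X in _ + X]big1 ?addr0.
  under eq_bigr => t _ do rewrite eqseq_cons eqxx /= -cat_rcons.
  rewrite -cat_rcons IH //.
  by rewrite -size_eq0 size_cat size_rcons.
move=> y /negbTE Hy; apply: big1 => t _.
by rewrite eqseq_cons Hy andbF.
Qed.

Hypothesis adj_deg : forall v : V, (1 < #|[set w | adj v w]|)%N.

Lemma turn_nxt (e : E) : tr e (nxt e).
Proof.
rewrite /nxt; case: pickP => [e' //|H]; exfalso.
have [w [Hw Hne]] : exists w, adj (Defs.tau e) w /\ w != Defs.iota e.
  case/card_gt1P: (adj_deg (Defs.tau e)) => w1 [w2 [H1 H2 H12]].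
  rewrite !inE in H1 H2.
  case: (eqVneq w1 (Defs.iota e)) => [E1|N1]; last by exists w1.
  by exists w2; split => //; rewrite -E1 eq_sym.
have Hadj : adj (Defs.tau e, w).1 (Defs.tau e, w).2 by [].
move: (H (exist _ (Defs.tau e, w) Hadj)).
by rewrite /turn /Defs.iota /Defs.tau /= eqxx /= xpair_eqE eqxx /= Hne.
Qed.

Lemma ext_lt (x : E) c i : (i < size c)%N -> ext x c i = nth x c i.
Proof. by move=> H; rewrite /ext H. Qed.

Lemma ext_path (x : E) s : path tr x s -> is_path (ext x (x :: s)).
Proof.
move=> Hp n.
have Hlast : ext x (x :: s) (size s) = last x s.
  by rewrite ext_lt //= (last_nth x).
have Hge : forall k, (size s <= k)%N -> ext x (x :: s) k.+1 = nxt (ext x (x :: s) k).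
  move=> k Hk; rewrite /ext /= ltnS.
  case: (ltnP k (size s)) => Hk2.
    by rewrite ltnNge Hk in Hk2.
  rewrite subSS ltnS.
  case: (ltngtP k (size s)) => Hk3.
  - by rewrite ltnNge Hk in Hk3.
  - by rewrite -subSS subSn.
  - by rewrite Hk3 subnn -(last_nth x).
case: (ltnP n (size s)) => Hn.
  rewrite !ext_lt //=; last by rewrite ltnS ltnW.
  by move/(pathP x): Hp => /(_ n Hn).
by rewrite Hge // turn_nxt.
Qed.

Lemma Top_D1 (g : E -> CC) p : Top (fun q => g (q 0%N)) p = Sop g (p 0%N).
Proof. by []. Qed.

Lemma pcons_path (e0 : E) p : is_path p -> tr e0 (p 0%N) -> is_path (pcons e0 p).
Proof. by move=> Hp H0 [|n] //; apply: Hp. Qed.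

Lemma inD_mono m m' (f : (nat -> E) -> CC) : (m <= m')%N -> inD m f -> inD m' f.
Proof.
move=> Hm H p q Hp Hq Hpq; apply: H => // i Hi; apply: Hpq.
exact: leq_trans Hi Hm.
Qed.

Lemma eig_D1 z (f : (nat -> E) -> CC) : z != 0 -> eigf z f -> inD 1 f.
Proof.
move=> Hz [[m Hm] Hf].
have step : forall k, inD k.+2 f -> inD k.+1 f.
  move=> k Hk p q Hp Hq Hpq.
  have Tpq : Top f p = Top f q.
    rewrite /Top (Hpq 0%N) //; apply: eq_bigr => e0 He0.
    apply: Hk.
    - by apply: pcons_path => //; rewrite (Hpq 0%N).
    - exact: pcons_path.
    by move=> [|i] //= Hi; apply: Hpq.
  apply: (mulfI Hz); by rewrite -Hf // -Hf // Tpq.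
elim: m Hm => [|m IH] Hm; first exact: inD_mono Hm.
case: m IH Hm => [//|m] IH Hm.
exact: IH (step _ Hm).
Qed.

Lemma eig_D1_eq z (f : (nat -> E) -> CC) : z != 0 -> eigf z f ->
  forall p, is_path p -> f p = f (ext (p 0%N) [:: p 0%N]).
Proof.
move=> Hz Hf p Hp; apply: (eig_D1 Hz Hf) => //.
  exact: ext_path.
by case.
Qed.

Lemma pairing_ext m (f f' : (nat -> E) -> CC) mu :
  (forall p, is_path p -> f p = f' p) -> pairing_at m f mu = pairing_at m f' mu.
Proof.
move=> H; apply: eq_bigr => t; case: (tval t) => //= x s Hs.
by rewrite H //; apply: ext_path.
Qed.

Lemma pairing0 (f : (nat -> E) -> CC) mu : pairing_at 0 f mu = 0.
Proof.
by rewrite /pairing_at big_mkcond (big_tuple0 (fun t => if postal t then evalc f t * mu t else 0)).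
Qed.

Lemma pair_D1 (mu : seq E -> CC) (g : E -> CC) m : isFA mu ->
  pairing_at m.+1 (fun p => g (p 0%N)) mu = \sum_(e : E) g e * mu [:: e].
Proof.
move=> FA; rewrite /pairing_at big_mkcond.
rewrite (big_tuple_cons _ (fun t => if postal t then evalc (fun p => g (p 0%N)) t * mu t else 0)).
apply: eq_bigr => x _.
rewrite -(lemK FA m (pre := [:: x])) // mulr_sumr.
apply: eq_bigr => t _ /=.
by case: (path _ _ _); rewrite ?mulr0 // /evalc ext_lt.
Qed.

Lemma ind_cons x c (e0 : E) p :
  ind R (x :: c) (pcons e0 p) = (e0 == x)%:R * ind R c p.
Proof.
rewrite /ind.
have -> : [forall i : 'I_(size (x :: c)), pcons e0 p i == nth (pcons e0 p 0%N) (x :: c) i]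
   = (e0 == x) && [forall i : 'I_(size c), p i == nth (p 0%N) c i].
  apply/forallP/andP.
    move=> H; split; first exact: (H ord0).
    apply/forallP => i.
    have Hi : (i.+1 < size (x :: c))%N by rewrite /= ltnS.
    move: (H (Ordinal Hi)) => /=.
    by rewrite (set_nth_default (p 0%N)).
  move=> [H1 /forallP H2] [[|i] Hi] //=.
  have Hi' : (i < size c)%N by [].
  move: (H2 (Ordinal Hi')) => /=.
  by rewrite (set_nth_default (p 0%N)).
by case: (e0 == x); case: [forall _, _]; rewrite ?mul1r ?mul0r.
Qed.

Lemma ind_take d (a : E) (t : seq E) q : (size d <= size t)%N ->
  (forall i, (i < size t)%N -> q i = nth a t i) -> ind R d q = (take (size d) t == d)%:R.
Proof.
move=> Hs Hq; rewrite /ind.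
have -> : [forall i : 'I_(size d), q i == nth (q 0%N) d i] = (take (size d) t == d).
  apply/forallP/eqP.
    move=> H; apply: (eq_from_nth (x0 := a)).
      by rewrite size_takel.
    move=> i; rewrite size_takel // => Hi'.
    rewrite nth_take // -Hq; last exact: leq_trans Hi' Hs.
    move/eqP: (H (Ordinal Hi')) => /= ->.
    exact: set_nth_default.
  move=> Heq i; rewrite Hq; last exact: leq_trans (ltn_ord i) Hs.
  by rewrite -(nth_take a (ltn_ord i)) Heq (set_nth_default a).
by case: (_ == _).
Qed.

Lemma sum_pred1 (P : pred E) x (a : CC) :
  \sum_(e | P e) (e == x)%:R * a = (P x)%:R * a.
Proof.
rewrite big_mkcond (bigD1 x) //= eqxx big1 ?addr0.
  by case: (P x); rewrite ?mul1r ?mul0r.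
by move=> e /negbTE ->; case: (P e); rewrite ?mul0r.
Qed.

Lemma Top_ind1 x p : Top (ind R [:: x]) p = (tr x (p 0%N))%:R.
Proof.
rewrite /Top.
under eq_bigr => e0 _ do rewrite ind_cons.
rewrite sum_pred1 /ind; case: ifP => [_|/forallP []]; first by rewrite mulr1.
by case.
Qed.

Lemma Top_ind2 x y s p : path tr x (y :: s) ->
  Top (ind R [:: x, y & s]) p = ind R (y :: s) p.
Proof.
move=> Hp; rewrite /Top.
under eq_bigr => e0 _ do rewrite ind_cons.
rewrite sum_pred1.
case H: (ind R (y :: s) p == 0); first by rewrite (eqP H) mulr0.
have Hy : p 0%N = y.
  move: H; rewrite /ind; case: ifP => [/forallP H _|_]; last by rewrite eqxx.
  exact: (eqP (H ord0)).
by move: Hp; rewrite Hy /= => /andP[-> _]; rewrite mul1r.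
Qed.

Lemma Tdual1 (mu : seq E -> CC) x : isFA mu ->
  Tdual mu [:: x] = \sum_(e | tr x e) mu [:: e].
Proof.
move=> FA; rewrite /Tdual /=.
rewrite (@pairing_ext _ _ (fun p => (fun e => (tr x e)%:R) (p 0%N)) _); last first.
  by move=> p _; rewrite Top_ind1.
rewrite (pair_D1 (fun e => (tr x e)%:R) 0 FA) [RHS]big_mkcond /=.
by apply: eq_bigr => e _; case: (tr x e); rewrite ?mul1r ?mul0r.
Qed.

Lemma Tdual2 (mu : seq E -> CC) x y s : isFA mu -> path tr x (y :: s) ->
  Tdual mu [:: x, y & s] = mu (y :: s).
Proof.
move=> FA Hp; rewrite /Tdual.
rewrite (@pairing_ext _ _ (ind R (y :: s)) _); last first.
  by move=> p _; rewrite Top_ind2.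
have Hys : postal (y :: s) by move: Hp => /= /andP[].
rewrite -[RHS](_ : (if postal ([::] ++ y :: s) then mu ([::] ++ y :: s) else 0) = _); last first.
  by rewrite /= -postal_cons Hys.
rewrite -(lemJ FA (n := size [:: x, y & s])) //.
rewrite /pairing_at big_mkcond /=.
apply: eq_bigr => t _.
rewrite [X in _ = X](_ : _ = if postal t && (take (size s).+1 t == y :: s) then mu t else 0) //.
case: ifP => Ht //=.
have [a [t' Et]] : exists a t', tval t = a :: t'.
  by move: Ht; case: (tval t) => [|a t'] //; exists a, t'.
rewrite /evalc Et (ind_take (t := a :: t') (a := a)).
- by rewrite -Et; case: (_ == _); rewrite ?mul1r ?mul0r.
- by rewrite -Et size_tuple /=.
by move=> i Hi; rewrite ext_lt.
Qed.

Lemma sumE (F : E -> CC) : \sum_(e : E) F e = \sum_(i < #|{: E}|) F (enum_val i).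
Proof.
rewrite (reindex (fun i : 'I_#|{: E}| => (enum_val i : E))) //; exists (fun e : E => enum_rank e) => [i _|e _].
  exact: enum_valK.
exact: enum_rankK.
Qed.

Section Z.
Variable z : CC.
Hypothesis z_neq0 : z != 0.

Definition Mat : 'M[CC]_#|{: E}| := \matrix_(i, j) (tr (enum_val i) (enum_val j))%:R.
Definition Am := Mat - z%:M.
Definition rv (g : E -> CC) : 'rV[CC]_#|{: E}| := \row_j g (enum_val j).
Definition cv (g : E -> CC) : 'cV[CC]_#|{: E}| := \col_j g (enum_val j).

Lemma rv_Sminus (g : E -> CC) : rv (Sminus z g) = rv g *m Am.
Proof.
apply/rowP => j; rewrite /Am mulmxBr mul_mx_scalar !mxE /Sminus /Sop.
congr (_ - _); try by rewrite /rv mxE.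
rewrite big_mkcond (sumE (fun e' => if tr e' (enum_val j) then g e' else 0)); apply: eq_bigr => i _; rewrite /rv /Mat !mxE.
by case: (tr _ _); rewrite ?mulr1 ?mulr0.
Qed.

Lemma cv_ker (nu : E -> CC) : Am *m cv nu = 0 <->
  (forall e, \sum_(e' | tr e e') nu e' = z * nu e).
Proof.
have Hent : forall i, (Am *m cv nu) i 0 =
   \sum_(e' | tr (enum_val i) e') nu e' - z * nu (enum_val i).
  move=> i; rewrite /Am mulmxBl mul_scalar_mx !mxE.
  congr (_ - _); try by rewrite /cv mxE.
  rewrite [RHS]big_mkcond (sumE (fun e' => if tr (enum_val i) e' then nu e' else 0)); apply: eq_bigr => j _; rewrite /cv /Mat !mxE.
  by case: (tr _ _); rewrite ?mul1r ?mul0r.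
split.
  move=> H e; apply/eqP; rewrite -subr_eq0.
  by move: (Hent (enum_rank e)); rewrite H enum_rankK mxE => <-.
move=> H; apply/colP => i; rewrite Hent H mxE subrr //.
Qed.

Lemma rv0 (g : E -> CC) : rv g = 0 <-> forall e, g e = 0.
Proof.
split.
  by move=> H e; move/rowP: H => /(_ (enum_rank e)); rewrite !mxE enum_rankK.
by move=> H; apply/rowP => j; rewrite !mxE H.
Qed.

Lemma cv0 (g : E -> CC) : cv g = 0 <-> forall e, g e = 0.
Proof.
split.
  by move=> H e; move/colP: H => /(_ (enum_rank e)); rewrite !mxE enum_rankK.
by move=> H; apply/colP => j; rewrite !mxE H.
Qed.

Lemma rv_cv (g nu : E -> CC) : (rv g *m cv nu) 0 0 = \sum_(e : E) g e * nu e.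
Proof. by rewrite mxE sumE; apply: eq_bigr => i _; rewrite !mxE. Qed.

Lemma rvK (u : 'rV[CC]_#|{: E}|) : rv (fun e => u 0 (enum_rank e)) = u.
Proof. by apply/rowP => j; rewrite !mxE enum_valK. Qed.

Lemma cvK (w : 'cV[CC]_#|{: E}|) : cv (fun e => w (enum_rank e) 0) = w.
Proof. by apply/colP => j; rewrite !mxE enum_valK. Qed.

Lemma ker1E (g : E -> CC) : in_ker_pow adj z 1 g <-> rv g *m Am = 0.
Proof. by rewrite -rv_Sminus rv0. Qed.

Lemma eigf_of (g : E -> CC) : (forall e, Sminus z g e = 0) -> eigf z (fun p => g (p 0%N)).
Proof.
move=> H; split.
  by exists 1%N => p q _ _ Hpq; rewrite Hpq.
move=> p _; rewrite Top_D1; apply/eqP; rewrite -subr_eq0.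
by move: (H (p 0%N)); rewrite /Sminus => ->.
Qed.

Definition mu_of (nu : E -> CC) (c : seq E) : CC :=
  if c is x :: c' then nu (last x c') / z ^+ size c' else 0.

Lemma FA_of (nu : E -> CC) : (forall e, \sum_(e' | tr e e') nu e' = z * nu e) ->
  isFA (mu_of nu).
Proof.
move=> H; case => // x c _ /=.
under eq_bigr => e _ do rewrite last_rcons size_rcons.
rewrite -mulr_suml H exprS.
have Hs : z ^+ size c != 0 by exact: expf_neq0.
by field; rewrite Hs z_neq0.
Qed.

Lemma eigmu_of (nu : E -> CC) : (forall e, \sum_(e' | tr e e') nu e' = z * nu e) ->
  eigmu z (mu_of nu).
Proof.
move=> H; have FA := FA_of H; split => //.
case => // x [|y s] Hp.
  rewrite Tdual1 //=.
  under eq_bigr => e _ do rewrite expr0 divr1.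
  by rewrite H expr0 divr1.
rewrite Tdual2 //= exprS.
have Hs : z ^+ size s != 0 by exact: expf_neq0.
by field; rewrite Hs z_neq0.
Qed.

Lemma mu_last (mu : seq E -> CC) : eigmu z mu -> forall c x, postal (x :: c) ->
  mu (x :: c) = mu [:: last x c] / z ^+ size c.
Proof.
move=> [FA Heig]; elim=> [|y s IH] x Hp.
  by rewrite expr0 divr1.
have H1 := Heig _ Hp.
rewrite Tdual2 // in H1.
have Hys : postal (y :: s) by move: Hp => /= /andP[].
rewrite /= exprS; move: H1; rewrite IH // => H1.
have Hs : z ^+ size s != 0 by exact: expf_neq0.
apply: (mulfI z_neq0); rewrite -H1.
by field; rewrite Hs z_neq0.
Qed.



Lemma Sminus_pt (h : E -> CC) : (forall e, h e = 0) -> forall e, Sminus z h e = 0.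
Proof.
by move=> H e; rewrite /Sminus /Sop big1 ?H ?mulr0 ?subr0 // => e' _; rewrite H.
Qed.

Lemma main_sec (hyp : forall u : 'rV[CC]_#|{: E}|, u *m Am *m Am = 0 -> u *m Am = 0) :
  pairing_nondegenerate adj z.
Proof.
split.
- move=> f Hf [p [Hp Hfp]].
  set g := fun e => f (ext e [:: e]).
  have Hfg : forall p, is_path p -> f p = g (p 0%N) := eig_D1_eq z_neq0 Hf.
  have Hg : forall e, Sminus z g e = 0.
    move=> e; have Hpe : is_path (ext e [:: e]) by apply: ext_path.
    have := proj2 Hf _ Hpe.
    rewrite /Top ext_lt //= => Heq.
    rewrite /Sminus /Sop -[g e]/(f (ext e [:: e])) -Heq; apply/eqP; rewrite subr_eq0; apply/eqP.
    apply: eq_bigr => e0 He0.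
    rewrite Hfg //; apply: pcons_path => //; rewrite ext_lt.
  have Hrv : rv g *m Am = 0 by apply/ker1E.
  have Hnz : rv g != 0.
    apply/negP => /eqP /rv0 H0; move: Hfp; by rewrite Hfg // H0 eqxx.
  have [w [Hw Hwne]] := LA_a hyp Hrv Hnz.
  set nu := fun e => w (enum_rank e) 0.
  have Hnu : forall e, \sum_(e' | tr e e') nu e' = z * nu e.
    by apply/cv_ker; rewrite cvK.
  exists (mu_of nu); split; first exact: eigmu_of.
  exists 1%N; split; first exact: eig_D1 z_neq0 Hf.
  rewrite (@pairing_ext _ _ (fun p => g (p 0%N)) _ Hfg) (pair_D1 g 0 (FA_of Hnu)).
  under eq_bigr => e _ do rewrite /= expr0 divr1.
  by rewrite -rv_cv cvK.
- move=> mu Hmu [c [Hc Hmuc]].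
  set nu := fun e => mu [:: e].
  have Hnu : forall e, \sum_(e' | tr e e') nu e' = z * nu e.
    by move=> e; case: Hmu => FA Heig; rewrite -Tdual1 // Heig.
  have Hw : Am *m cv nu = 0 by apply/cv_ker.
  have Hnz : cv nu != 0.
    apply/negP => /eqP /cv0 H0; move: Hmuc.
    case: c Hc => // x c' Hc.
    by rewrite (mu_last Hmu Hc) [mu _]H0 mul0r eqxx.
  have [u [Hu Hune]] := LA_b hyp Hw Hnz.
  set g := fun e => u 0 (enum_rank e).
  have Hg : forall e, Sminus z g e = 0.
    by apply/(ker1E g); rewrite rvK.
  exists (fun p => g (p 0%N)); split; first exact: eigf_of.
  exists 1%N; split; first by move=> p q _ _ Hpq; rewrite Hpq.
  rewrite (pair_D1 g 0); last by case: Hmu.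
  by rewrite -(rv_cv g nu) rvK.
Qed.

Lemma main_iff : pairing_nondegenerate adj z <->
  (forall k : nat, (1 <= k)%N -> forall g : E -> CC,
     in_ker_pow adj z 1 g <-> in_ker_pow adj z k g).
Proof.
split.
- move=> [ND1 _].
  have key : forall g : E -> CC, in_ker_pow adj z 2 g -> in_ker_pow adj z 1 g.
    move=> g H2.
    set h := Sminus z g.
    have Hh : forall e, Sminus z h e = 0 := H2.
    move=> e /=; change (h e = 0); apply/eqP; apply: contraT => Hne.
    have Hf := eigf_of Hh.
    have Hnz : exists p, is_path p /\ (fun p => h (p 0%N)) p != 0.
      exists (ext e [:: e]); split; first exact: ext_path.
      by rewrite /= ext_lt.
    have [mu [Hmu [m [_ Hpair]]]] := ND1 _ Hf Hnz.
    move: Hpair; case: m => [|m]; first by rewrite pairing0 eqxx.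
    rewrite (pair_D1 h m); last by case: Hmu.
    set nu := fun e => mu [:: e].
    have Hnu : Am *m cv nu = 0.
      apply/cv_ker => x; case: Hmu => FA Heig.
      by rewrite -Tdual1 // Heig.
    by rewrite -(rv_cv h nu) rv_Sminus -mulmxA Hnu mulmx0 mxE eqxx.
  elim=> [//|k IH] _ g.
  case: k IH => [|k] IH; first by [].
  split.
  + move=> H1 e; rewrite iterS; apply: Sminus_pt => e'.
    exact: (proj1 (IH isT g) H1).
  + move=> Hk; apply: key.
    have Hk' : in_ker_pow adj z k.+1 (Sminus z g).
      by move=> e; move: (Hk e); rewrite iterSr.
    exact: (proj2 (IH isT _) Hk').
- move=> H; apply: main_sec => u Hu.
  set g := fun e => u 0 (enum_rank e).
  have Hg : rv g = u := rvK u.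
  rewrite -Hg; apply/ker1E; apply/(H 2%N isT).
  apply: (proj1 (rv0 _)).
  by rewrite !rv_Sminus Hg.
Qed.
End Z.
End G.

Theorem mainTheorem17 (R : realType) (V : finType) (adj : rel V)
  (adj_sym : symmetric adj) (adj_irr : irreflexive adj)
  (adj_conn : forall u v : V, connect adj u v)
  (adj_deg : forall v : V, (1 < #|[set w | adj v w]|)%N)
  (z : C R) (z_neq0 : z != 0) :
  pairing_nondegenerate adj z <->
  (forall k : nat, (1 <= k)%N -> forall g : E adj -> C R,
     in_ker_pow adj z 1 g <-> in_ker_pow adj z k g).
Proof.
exact: (@main_iff R V adj adj_deg z z_neq0).
Qed.
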